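(* Consider DTR with heuristic $h_{e^*}$ on the linear feedforward network (as in the context). Suppose DTR seeks to (re)materialize the forward tensor $t_k$, $k \le N$, where the resident tensor preceding $t_k$ is $t_j$ with $j < k$, and suppose $t_j$ is not evicted during the computation of $t_k$. If the algorithm begins with $t_j$ in memory and with $M$ units of memory, and runs until computing $t_k$, then the maximum length $L$ of any evicted sequence of tensors between $t_j$ and $t_k$ satisfies $L \le \frac{2((k-j)-1)}{M-1}$.
   Context: Linear feedforward network: tensors $t_0, \dots, t_N$ (and gradients $\hat t_1,\dots,\hat t_N$), with $t_i = f_i(t_{i-1})$ for $1 \le i \le N$; $t_0$ is always resident and free. Every tensor occupies one unit of memory and every operator application costs one unit. Computing $t_k$ from a resident $t_j$ means computing $t_{j+1}, t_{j+2}, \dots, t_k$ in order. An evicted sequence between $t_j$ and $t_k$ is a maximal run of consecutive forward tensors $t_{a+1}, \dots, t_{b-1}$ ($j \le a < b \le k$) none of which is resident; its length is the number of tensors in it. DTR: when a new tensor must be stored and memory is full, DTR evicts an evictable resident tensor (one not needed as input to the operation currently being performed) with minimal heuristic score. Heuristic $h_{e^*}(t) = |e^*(t)|$, where $e^*(t)$ is the set of currently evicted, already-computed tensors reachable from $t$ backwards or forwards along dependency edges through evicted tensors only (in the chain, the adjacent evicted runs on either side of $t$); not-yet-computed tensors are not considered. *)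

(* Defs.v *)
From mathcomp Require Import all_boot all_order all_algebra.
Set Implicit Arguments. Unset Strict Implicit. Unset Printing Implicit Defensive.

(* A DTR state during the (re)materialization of t_k from t_j:
   [cur] = index of the most recently computed forward tensor
   (tensors t_j .. t_cur have been computed; t_(cur+1) .. t_k are not yet
   computed); [res i] = t_i is resident. *)
Record dtr_state := DtrState { cur : nat; res : nat -> bool }.

Definition dtr_init (j : nat) : dtr_state := DtrState j (fun i => i == j).

Definition evicted (j : nat) (s : dtr_state) (i : nat) : bool :=
  (j <= i <= cur s) && ~~ res s i.

Fixpoint run_left (ev : pred nat) (i : nat) : nat :=
  match i with
  | 0 => 0
  | p.+1 => if ev p then (run_left ev p).+1 else 0
  end.

Fixpoint run_right (ev : pred nat) (i fuel : nat) : nat :=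
  match fuel with
  | 0 => 0
  | f.+1 => if ev i.+1 then (run_right ev i.+1 f).+1 else 0
  end.

(* Heuristic h_{e*}(t_i) = |e*(t_i)|: the evicted, already-computed tensors
   reachable from t_i through evicted tensors only, i.e. the adjacent evicted
   runs on either side of t_i.  (Fuel k - j suffices: computed tensors lie in
   [j, k].) *)
Definition score (j k : nat) (s : dtr_state) (i : nat) : nat :=
  run_left (evicted j s) i + run_right (evicted j s) i (k - j).

(* Memory in use: number of resident tensors among t_j .. t_cur
   (every tensor occupies one unit). *)
Definition mem (j : nat) (s : dtr_state) : nat :=
  count (res s) (iota j ((cur s).+1 - j)).

(* Evictable: resident, computed, and not the input t_cur of the operation
   currently being performed (computing t_(cur+1)). *)
Definition evictable (j : nat) (s : dtr_state) (i : nat) : bool :=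
  [&& j <= i <= cur s, res s i & i != cur s].

Inductive dtr_step (j k M : nat) : dtr_state -> option nat -> dtr_state -> Prop :=
| StepCompute s :
    cur s < k -> mem j s < M ->
    dtr_step j k M s None
      (DtrState (cur s).+1 (fun i => (i == (cur s).+1) || res s i))
| StepEvict s v :
    cur s < k -> M <= mem j s ->
    evictable j s v ->
    (forall w, evictable j s w -> score j k s v <= score j k s w) ->
    dtr_step j k M s (Some v) (DtrState (cur s) (fun i => (i != v) && res s i)).

Inductive dtr_run (j k M : nat) : dtr_state -> dtr_state -> Prop :=
| RunRefl s : dtr_run j k M s s
| RunStep s l s' s'' :
    dtr_step j k M s l s' -> l <> Some j -> dtr_run j k M s' s'' ->
    dtr_run j k M s s''.

Definition evicted_seq (j k : nat) (s : dtr_state) (a b : nat) : Prop :=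
  [/\ j <= a < b, b <= k,
      (forall i, a < i < b -> ~~ res s i),
      (a = j \/ res s a) & (b = k \/ res s b)].

(* Main.v *)
Require Import Defs.
From mathcomp Require Import all_boot all_order all_algebra.
From mathcomp Require Import zify.
Import GRing.Theory Num.Theory.

Lemma rl_sum (ev : pred nat) n :
  \sum_(0 <= w < n) (~~ ev w) * run_left ev w + run_left ev n <= count ev (iota 0 n).
Proof.
elim: n => [|n IH]; first by rewrite big_geq.
have Hi : iota 0 n.+1 = iota 0 n ++ [:: n] by rewrite -addn1 iotaD.
rewrite big_nat_recr // Hi count_cat /= addn0.
by case: (ev n) IH => /= IH; lia.
Qed.

Lemma rr_sum (ev : pred nat) K (H : forall x, K <= x -> ~~ ev x) d m :
  K - m = d ->
  \sum_(m.+1 <= w < K) (~~ ev w) * run_right ev w (K - w) + run_right ev m (K - m)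
  <= count ev (iota m.+1 (K - m.+1)).
Proof.
elim: d m => [|d IH] m Ed.
  rewrite big_geq; last lia.
  by rewrite Ed /= (_ : K - m.+1 = 0) //; lia.
rewrite Ed /=.
have Ed' : K - m.+1 = d by lia.
case: (ltnP m.+1 K) => hK.
  rewrite big_ltn // Ed'.
  have := IH m.+1 Ed'; rewrite Ed'.
  have -> : count ev (iota m.+1 d) = ev m.+1 + count ev (iota m.+2 (K - m.+2)).
    by rewrite (_ : d = (K - m.+2).+1) //; lia.
  by case: (ev m.+1) => /=; lia.
rewrite big_geq // (negbTE (H _ hK)).
lia.
Qed.

Lemma rr_fuel (ev : pred nat) K (H : forall x, K <= x -> ~~ ev x) f w :
  K - w <= f -> run_right ev w f = run_right ev w (K - w).
Proof.
elim: f w => [|f IH] w H1.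
  by rewrite (_ : K - w = 0) //; lia.
case: (ltnP w K) => hw.
  rewrite (_ : K - w = (K - w.+1).+1); last lia.
  by rewrite /= (IH w.+1) //; lia.
rewrite (_ : K - w = 0); last lia.
by rewrite /= (negbTE (H _ _)) //; lia.
Qed.

Lemma rl_ge (ev : pred nat) p w :
  (forall x, p <= x < w -> ev x) -> w - p <= run_left ev w.
Proof.
elim: w => [|w IH] H //=.
case: (leqP p w) => hp; last lia.
rewrite H; last lia.
have := IH (fun x hx => H x ltac:(lia)). lia.
Qed.

Lemma rr_ge (ev : pred nat) d w f :
  (forall x, w < x <= w + d -> ev x) -> d <= f -> d <= run_right ev w f.
Proof.
elim: d w f => [|d IH] w f H Hf //.
case: f Hf => [|f] Hf //=.
rewrite H; last lia.
have := IH w.+1 f (fun x hx => H x ltac:(lia)) ltac:(lia). lia.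
Qed.

Lemma sum_ind (P : pred nat) n x :
  \sum_(0 <= w < n) P w * x = count P (iota 0 n) * x.
Proof.
elim: n => [|n IH]; first by rewrite big_geq.
have Hi : iota 0 n.+1 = iota 0 n ++ [:: n] by rewrite -addn1 iotaD.
rewrite big_nat_recr // IH Hi count_cat /= addn0.
by case: (P n) => /=; lia.
Qed.

Lemma ev_out j s x : (cur s).+1 <= x -> ~~ evicted j s x.
Proof. rewrite /evicted => h; apply/negP => /andP [/andP [_ h2] _]; lia. Qed.

Lemma sum_scores j k s : j <= cur s < k ->
  \sum_(0 <= w < (cur s).+1) evictable j s w * score j k s w
    <= 2 * count (evicted j s) (iota 0 (cur s).+1).
Proof.
move=> hc.
set ev := evicted j s; set K := (cur s).+1.
have H : forall x, K <= x -> ~~ ev x by move=> x; apply: ev_out.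
apply: (@leq_trans (\sum_(0 <= w < K) ((~~ ev w) * run_left ev w
                   + (~~ ev w) * run_right ev w (K - w)))).
  apply: leq_sum => w _.
  case E: (evictable j s w) => //=; rewrite mul1n.
  move: E; rewrite /evictable => /and3P [/andP [h1 h2] h3 h4].
  have -> : ~~ ev w by rewrite /ev /evicted h3 andbF.
  rewrite /score -/ev (@rr_fuel ev K H (k-j) w) //; lia.
rewrite big_split.
have h1 := rl_sum ev K.
have h2 : \sum_(0 <= w < K) ~~ ev w * run_right ev w (K - w) <= count ev (iota 0 K).
  rewrite big_ltn // /K.
  have := @rr_sum ev K H (K - 0) 0 erefl.
  rewrite /K /= subn1 /=.
  case: (ev 0) => /=; lia.
apply: leq_trans (leq_add (leq_trans (leq_addr _ _) h1) h2) _; lia.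
Qed.

Lemma count_evb j s : j <= cur s -> res s (cur s) ->
  (count (evictable j s) (iota 0 (cur s).+1)).+1 = Defs.mem j s.
Proof.
move=> hj hc; rewrite /Defs.mem.
have -> : iota 0 (cur s).+1 = iota 0 j ++ (iota j (cur s - j) ++ [:: cur s]).
  have -> : iota j (cur s - j) ++ [:: cur s] = iota j (cur s - j + 1).
    by rewrite iotaD (_ : j + (cur s - j) = cur s) //; lia.
  rewrite -{1}[j]add0n -iotaD; congr iota; lia.
have -> : (cur s).+1 - j = (cur s - j) + 1 by lia.
rewrite iotaD !count_cat /= (_ : j + (cur s - j) = cur s); last lia.
rewrite hc.
have -> : count (evictable j s) (iota 0 j) = 0.
  apply/eqP; rewrite -leqn0 leqNgt -has_count; apply/hasP => -[x].
  rewrite mem_iota /evictable => hx /and3P [/andP [h1 _] _ _]; lia.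
have -> : count (evictable j s) (iota j (cur s - j)) = count (res s) (iota j (cur s - j)).
  apply: eq_in_count => x; rewrite mem_iota /evictable => hx.
  have -> : (j <= x <= cur s) by lia.
  have -> : (x != cur s) by apply/eqP; lia.
  by rewrite andbT.
rewrite /evictable eqxx !andbF /=; lia.
Qed.

Lemma count_ev j s : j <= cur s ->
  count (evicted j s) (iota 0 (cur s).+1) + Defs.mem j s = (cur s).+1 - j.
Proof.
move=> hj; rewrite /Defs.mem.
have -> : iota 0 (cur s).+1 = iota 0 j ++ iota j ((cur s).+1 - j).
  rewrite -{1}[j]add0n -iotaD; congr iota; lia.
rewrite count_cat.
have -> : count (evicted j s) (iota 0 j) = 0.
  apply/eqP; rewrite -leqn0 leqNgt -has_count; apply/hasP => -[x].
  rewrite mem_iota /evicted => hx /andP [/andP [h1 _] _]; lia.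
have -> : count (evicted j s) (iota j ((cur s).+1 - j)) = count (predC (res s)) (iota j ((cur s).+1 - j)).
  apply: eq_in_count => x; rewrite mem_iota /evicted => hx.
  have -> : (j <= x <= cur s) by lia.
  done.
by rewrite add0n addnC count_predC size_iota.
Qed.

Definition Inv j k M (s : dtr_state) : Prop :=
  [/\ j <= cur s <= k, res s j, res s (cur s),
     (forall x, res s x -> j <= x <= cur s) &
     ((2 <= M \/ cur s = j) /\
     (forall a b, a < b <= cur s -> res s a -> res s b ->
        (forall x, a < x < b -> ~~ res s x) ->
        (b - a).-1 * (M - 1) <= 2 * (k - j - 1)))].

Lemma inv_init j k M : j <= k -> Inv j k M (dtr_init j).
Proof.
move=> hjk; split => //=.
- by rewrite leqnn.
- by move=> x /eqP ->; rewrite leqnn.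
- split; first by right.
  by move=> a b hab /eqP ha /eqP hb; lia.
Qed.

Lemma evict_gap j k M s v :
  Inv j k M s -> cur s < k -> M <= Defs.mem j s -> evictable j s v ->
  (forall w, evictable j s w -> score j k s v <= score j k s w) ->
  forall a b, a < v < b -> b <= cur s -> res s a -> res s b ->
  (forall x, a < x < b -> x != v -> ~~ res s x) ->
  (b - a).-1 * (M - 1) <= 2 * (k - j - 1).
Proof.
move=> [hc hj hcur hrng [hM _]] hk hmem hv hmin a b hav hb ha hbr hint.
have hv' := hv; move: hv' => /and3P [/andP [hv1 hv2] hv3 hv4].
have hja := hrng a ha.
set ev := evicted j s.
set sv := score j k s v.
have hsv : (b - a).-1 <= sv + 1.
  have h1 : v - a.+1 <= run_left ev v.
    apply: rl_ge => x hx; rewrite /ev /evicted.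
    rewrite hint; [|lia|apply/eqP; lia].
    by rewrite andbT; apply/andP; split; lia.
  have h2 : b - v - 1 <= run_right ev v (k - j).
    apply: rr_ge; last lia.
    move=> x hx; rewrite /ev /evicted.
    rewrite hint; [|lia|apply/eqP; lia].
    by rewrite andbT; apply/andP; split; lia.
  rewrite /sv /score -/ev; lia.
have hsum := @sum_scores j k s ltac:(lia).
have hle : \sum_(0 <= w < (cur s).+1) evictable j s w * sv
         <= \sum_(0 <= w < (cur s).+1) evictable j s w * score j k s w.
  apply: leq_sum => w _; case E: (evictable j s w) => //=.
  by rewrite !mul1n hmin.
rewrite sum_ind in hle.
have hE := @count_evb j s ltac:(lia) hcur.
have hC := @count_ev j s ltac:(lia).
set nE := count (evictable j s) (iota 0 (cur s).+1) in hle hE.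
set cnt := count (evicted j s) (iota 0 (cur s).+1) in hsum hC.
set L := (b - a).-1 in hsv *.
have e1 : L * (M - 1) <= L * nE by apply: leq_mul; lia.
have e2 : L * nE <= (sv + 1) * nE by apply: leq_mul.
rewrite mulnDl mul1n in e2.
rewrite mulnC in hle.
lia.
Qed.

Lemma step_inv j k M s l s' :
  dtr_step j k M s l s' -> l <> Some j -> Inv j k M s -> Inv j k M s'.
Proof.
case=> {s l s'} [s hk hm | s v hk hm hv hmin] hl hI;
  have [hc hj hcur hrng [hM hgap]] := hI.
- split => /=.
  + lia.
  + by rewrite hj orbT.
  + by rewrite eqxx.
  + move=> x /orP [/eqP -> | /hrng]; lia.
  + split.
      case: hM => [|hcj]; first by left.
      left; move: hm; rewrite /Defs.mem hcj subSnn /= hj; lia.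
    move=> a b hab ha hb hint.
    case: (ltnP b (cur s).+1) => hb'.
    * have nb : (b == (cur s).+1) = false by apply/negbTE; apply/eqP; lia.
      have na : (a == (cur s).+1) = false by apply/negbTE; apply/eqP; lia.
      rewrite nb na /= in ha hb.
      apply: hgap => //; first lia.
      move=> x hx; have := hint x hx.
      by rewrite (_ : (x == (cur s).+1) = false) //; apply/negbTE; apply/eqP; lia.
    * case: (ltnP a (cur s)) => ha'.
        have := hint (cur s); rewrite hcur orbT; lia.
      have -> : (b - a).-1 = 0 by lia.
      done.
- have hvj : v != j by apply/eqP => E; apply: hl; rewrite E.
  have hv' := hv; move: hv' => /and3P [/andP [hv1 hv2] hv3 hv4].
  split => /=.
  + lia.
  + by rewrite eq_sym hvj hj.
  + by rewrite eq_sym hv4 hcur.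
  + by move=> x /andP [_ /hrng].
  + split; first by [].
    move=> a b hab /andP [hav ha] /andP [hbv hbr] hint.
    have hint' : forall x, a < x < b -> x != v -> ~~ res s x.
      by move=> x hx hxv; have := hint x hx; rewrite hxv.
    case: (boolP ((a < v) && (v < b))) => hin; last first.
      apply: hgap => //.
      move=> x hx; apply: hint' => //; apply/eqP => E; subst x.
      move: hin hav hbv; rewrite negb_and -!leqNgt => /orP [] ? /eqP ? /eqP ?; lia.
    apply: (@evict_gap j k M s v hI hk hm hv hmin a b hin) => //; lia.
Qed.

Lemma run_inv j k M s s' :
  dtr_run j k M s s' -> Inv j k M s -> Inv j k M s'.
Proof.
elim=> // s0 l s1 s2 hstep hl _ IH hI.
exact: IH (@step_inv _ _ _ _ _ _ hstep hl hI).
Qed.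

Local Open Scope ring_scope.

Theorem lemma3 (N j k M : nat) (s : dtr_state) :
  (j < k)%N -> (k <= N)%N ->
  dtr_run j k M (dtr_init j) s -> cur s = k ->
  forall a b, evicted_seq j k s a b ->
    ((b - a).-1)%:R <= (2 * ((k - j) - 1))%:R / (M - 1)%:R :> rat.
Proof.
move=> hjk hkN hrun hck a b [/andP [hja hab] hbk hint ha hb].
have [hc hj hcur hrng [hM hgap]] := @run_inv j k M _ _ hrun (@inv_init j k M (ltnW hjk)).
have hM2 : (1 < M)%N by case: hM => // E; rewrite hck in E; move: hjk; rewrite E ltnn.
have ha' : res s a by case: ha => [->|].
have hb' : res s b by case: hb => [->|] //; rewrite -hck.
have := hgap a b ltac:(lia) ha' hb' hint.
move=> H.
rewrite ler_pdivlMr; last by rewrite ltr0n; lia.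
by rewrite -natrM ler_nat.
Qed.
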